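(* Let $(\Omega,\mathcal F)$ be a measurable space and $\mathcal P$ a σ-convex family of probability measures on $\mathcal F$. The following are equivalent: (1) $\mathcal P$ is dominated by a σ-finite measure; (2) there is a countable set $\mathcal Q$ of pairwise singular probability measures on $\mathcal F$ such that $\mathcal Q\lll\mathcal P\lll\mathrm{sconv}(\mathcal Q)$.
   Context: σ-convex: closed under countable convex combinations $\sum_k\lambda_kP_k$ ($\lambda_k\ge0$, $\sum\lambda_k=1$). $\mathrm{sconv}(\mathcal Q)$ is the set of all countable convex combinations of elements of $\mathcal Q$. For families $\mathcal A,\mathcal B$ of measures, $\mathcal A\lll\mathcal B$ means that for every $A\in\mathcal A$ there is $B\in\mathcal B$ with $A\ll B$. $\mathcal P$ is dominated by a measure $\mu$ if $P\ll\mu$ for all $P\in\mathcal P$. *)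

(* Defs.v *)
From HB Require Import structures.
From mathcomp Require Import all_boot all_order all_algebra.
From mathcomp Require Import all_classical all_reals all_analysis.
Set Implicit Arguments. Unset Strict Implicit. Unset Printing Implicit Defensive.
Import Order.TTheory GRing.Theory Num.Theory numFieldNormedType.Exports.
Local Open Scope classical_set_scope.
Local Open Scope ring_scope.

Section defs.
Context d (T : measurableType d) (R : realType).

(* P is a countable convex combination of elements of Q:
   P = sum_k lam_k P_k with lam_k >= 0, sum lam_k = 1, P_k in Q
   (finite combinations are included by taking lam_k = 0 for large k). *)
Definition sconv (Q : set (probability T R)) : set (probability T R) :=
  [set P | exists (lam : nat -> R) (Pk : nat -> probability T R),
     [/\ (forall k, 0 <= lam k),
         (series lam) @ \oo --> (1 : R),
         (forall k, Q (Pk k)) &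
         (forall A, measurable A ->
            P A = (\sum_(0 <= k <oo) ((lam k)%:E * Pk k A))%E)]].

Definition sigma_convex (F : set (probability T R)) : Prop := sconv F `<=` F.

Definition lll (A B : set (probability T R)) : Prop :=
  forall P, A P -> exists2 Q, B Q & (P : set T -> \bar R) `<< Q.

Definition fam_dominated_by (F : set (probability T R)) (mu : set T -> \bar R) :=
  forall P, F P -> (P : set T -> \bar R) `<< mu.

Definition msingular (P Q : set T -> \bar R) : Prop :=
  exists A, [/\ measurable A, P A = 0%E & Q (~` A) = 0%E].

End defs.

(* Main.v *)
Require Import Defs.
From HB Require Import structures.
From mathcomp Require Import all_boot all_order all_algebra.
From mathcomp Require Import all_classical all_reals all_analysis.
Set Implicit Arguments. Unset Strict Implicit. Unset Printing Implicit Defensive.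
Import Order.TTheory GRing.Theory Num.Theory numFieldNormedType.Exports.
Local Open Scope classical_set_scope.
Local Open Scope ring_scope.
Section comb.
Context d (T : measurableType d) (R : realType).
Variable Pn : nat -> probability T R.

Definition lamc (n : nat) : R := geometric (2^-1) (2^-1) n.

Lemma lamc_gt0 n : 0 < lamc n.
Proof. by rewrite /lamc /geometric mulr_gt0 // exprn_gt0. Qed.

Definition lamnn n : {nonneg R} := NngNum (ltW (lamc_gt0 n)).

Lemma lamc_cvg : series lamc @ \oo --> (1 : R).
Proof.
have -> : (1 : R) = 2^-1 * (1 - 2^-1)^-1.
  have h : (1 - 2^-1 : R) = 2^-1 by rewrite {1}(splitr 1) mul1r addrK.
  by rewrite h divff.
apply: cvg_geometric_series.
by rewrite ger0_norm // invf_lt1 // ltr1n.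
Qed.

Definition combm : {measure set T -> \bar R}^nat := fun n => mscale (lamnn n) (Pn n).
Definition comb := mseries combm 0.

Lemma combE A : comb A = (\sum_(0 <= k <oo) ((lamc k)%:E * Pn k A))%E.
Proof. by []. Qed.

Lemma comb_setT : comb setT = 1%E.
Proof.
rewrite combE.
under eq_eseriesr do rewrite probability_setT mule1.
apply: cvg_lim => //; apply: cvg_EFin; first by near=> n; rewrite sumEFin.
rewrite (_ : _ \o _ = series lamc); first exact: lamc_cvg.
by apply/funext => n /=; rewrite sumEFin.
Unshelve. all: by end_near.
Qed.

HB.instance Definition _ := Measure.copy comb (mseries combm 0).
HB.instance Definition _ := Measure_isProbability.Build _ _ _ comb comb_setT.

Lemma comb0 A : measurable A -> comb A = 0%E -> forall n, Pn n A = 0%E.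
Proof.
move=> mA; rewrite combE => h n.
have : ((lamc n)%:E * Pn n A <= 0)%E.
  rewrite -h (le_trans _ (nneseries_lim_ge n.+1 _)) //.
    rewrite big_nat_recr //=; apply: leeDr; apply: sume_ge0 => k _.
    by rewrite mule_ge0 // lee_fin ltW // lamc_gt0.
  by move=> k _ _; rewrite mule_ge0 // lee_fin ltW // lamc_gt0.
rewrite pmule_rle0 ?lte_fin ?lamc_gt0 // => h2; apply/eqP; by rewrite eq_le h2 measure_ge0.
Qed.

Lemma comb_sconv (Q : set (probability T R)) : (forall n, Q (Pn n)) -> sconv Q comb.
Proof.
move=> hQ; exists lamc, Pn; split => //.
- by move=> k; exact/ltW/lamc_gt0.
- exact: lamc_cvg.
Qed.

End comb.
Lemma fin_add_le0 (R : realType) (x y : \bar R) : x \is a fin_num -> (0 <= y)%E ->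
  (x + y <= x)%E -> y = 0%E.
Proof.
move=> xf y0; rewrite -{2}(adde0 x) leeD2lE // => y0'.
by apply/eqP; rewrite eq_le y0 y0'.
Qed.

Section exhaust.
Context d (T : measurableType d) (R : realType).
Variables (mu : {measure set T -> \bar R}) (E : set T).
Hypotheses (mE : measurable E) (muE : (mu E < +oo)%E).

Lemma exhaust (S : set (set T)) :
  (forall B, S B -> measurable B /\ B `<=` E) -> S set0 ->
  (forall Bn : (set T)^nat, (forall n, S (Bn n)) -> S (\bigcup_n Bn n)) ->
  exists2 B, S B & forall C, S C -> (mu C <= mu B)%E.
Proof.
move=> SE S0 SU.
set s := ereal_sup (mu @` S).
have s_ub C : S C -> (mu C <= s)%E by move=> SC; apply: ereal_sup_ubound; exists C.
have s_ge0 : (0 <= s)%E by rewrite -(measure0 mu); exact: s_ub.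
have s_le : (s <= mu E)%E.
  apply: ge_ereal_sup => _ [C SC <-]; have [mC CE] := SE C SC.
  by apply: le_measure; rewrite ?inE.
have s_fin : s \is a fin_num by rewrite ge0_fin_numE // (le_lt_trans s_le).
have : forall n : nat, exists C, S C /\ (s - (n.+1%:R^-1)%:E < mu C)%E.
  move=> n; have [_ [C SC <-] h] := @ub_ereal_sup_adherent R _ (n.+1%:R^-1 : R)%R
     (ltac:(by rewrite invr_gt0)) s_fin.
  by exists C.
move=> /choice[Cn hCn].
have mCn n : measurable (Cn n) by have [/SE[]] := hCn n.
exists (\bigcup_n Cn n); first by apply: SU => n; have [] := hCn n.
move=> C SC; apply: (le_trans (s_ub C SC)).
apply/lee_addgt0Pr => e e0.
have [k hk] := ltr_add_invr e0; rewrite add0r in hk.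
have [_ h] := hCn k.
rewrite lteBlDr // in h.
apply: (le_trans (ltW h)); apply: leeD; last by rewrite lee_fin ltW.
by apply: le_measure; rewrite ?inE //; [exact: bigcup_measurable | exact: bigcup_sup].
Qed.

End exhaust.

Section nullh.
Context d (T : measurableType d) (R : realType).
Implicit Types m : {measure set T -> \bar R}.

Lemma null_sub m A B : measurable A -> measurable B -> A `<=` B -> m B = 0%E -> m A = 0%E.
Proof.
move=> mA mB AB hB; apply/eqP; rewrite eq_le measure_ge0 andbT -hB.
by apply: le_measure; rewrite ?inE.
Qed.

Lemma null_bigcup m (Fn : (set T)^nat) A : (forall n, measurable (Fn n)) ->
  (forall n, m (Fn n) = 0%E) -> measurable A -> A `<=` \bigcup_n Fn n -> m A = 0%E.
Proof.
move=> mF h0 mA AF; apply/eqP; rewrite eq_le measure_ge0 andbT.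
apply: (le_trans (measure_sigma_subadditive m mF mA AF)).
by rewrite eseries0 // => i _ _; rewrite h0.
Qed.

Lemma null_U2 m A B : measurable A -> measurable B -> m A = 0%E -> m B = 0%E ->
  m (A `|` B) = 0%E.
Proof.
move=> mA mB hA hB; apply/eqP; rewrite eq_le measure_ge0 andbT.
apply: (le_trans (measureU2 m mA mB)).
rewrite le_eqVlt; apply/orP; left; apply/eqP.
exact: (etrans (f_equal2 _ hA hB) (adde0 0%E)).
Qed.

End nullh.
Arguments null_sub {d T R m A B}.
Arguments null_bigcup {d T R m} Fn {A}.
Arguments null_U2 {d T R m A B}.

Section main.
Context d (T : measurableType d) (R : realType).
Variables (F : set (probability T R)) (mu : {measure set T -> \bar R}).
Hypothesis sF : sigma_convex F.
Hypothesis hdom : forall P, F P -> forall A, measurable A -> mu A = 0%E -> P A = 0%E.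

Lemma comb_F (Pn : nat -> probability T R) : (forall n, F (Pn n)) ->
  exists2 P : probability T R, F P &
    forall A, measurable A -> P A = 0%E -> forall n, Pn n A = 0%E.
Proof.
move=> hF; exists (comb Pn); first exact/sF/comb_sconv.
by move=> A mA h n; exact: comb0.
Qed.

Lemma pair_F (P1 P2 : probability T R) : F P1 -> F P2 ->
  exists2 Q : probability T R, F Q &
    forall A, measurable A -> Q A = 0%E -> P1 A = 0%E /\ P2 A = 0%E.
Proof.
move=> F1 F2.
have [Q FQ hQ] := @comb_F (fun n => if n is 0%N then P1 else P2) (ltac:(by case)).
by exists Q => // A mA h; split; [exact: (hQ A mA h 0%N)|exact: (hQ A mA h 1%N)].
Qed.

Lemma local_dom E (P00 : probability T R) : measurable E -> (mu E < +oo)%E -> F P00 ->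
  exists2 PE : probability T R, F PE & forall P, F P -> forall A, measurable A ->
    A `<=` E -> PE A = 0%E -> P A = 0%E.
Proof.
move=> mE muE F00.
pose charges (P : probability T R) B :=
  forall C, measurable C -> C `<=` B -> P C = 0%E -> mu C = 0%E.
pose S := [set B | [/\ measurable B, B `<=` E & exists2 P, F P & charges P B]].
have S0 : S set0.
  split; [exact: measurable0 | exact: sub0set |].
  exists P00 => // C mC; rewrite subset0 => -> _; exact: measure0.
have SU : forall Bn : (set T)^nat, (forall n, S (Bn n)) -> S (\bigcup_n Bn n).
  move=> Bn hB.
  have /choice[Pn hPn] : forall n, exists P, F P /\ charges P (Bn n).
    by move=> n; have [_ _ [P FP chP]] := hB n; exists P.
  have mBn n : measurable (Bn n) by have [] := hB n.
  have [P FP hP] := @comb_F Pn (fun n => (hPn n).1).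
  split; [exact: bigcup_measurable | by move=> x [n _ Bnx]; have [_ /(_ x Bnx)] := hB n|].
  exists P => // C mC CB PC0.
  apply: (@null_bigcup _ _ _ mu (fun n => C `&` Bn n)).
  + by move=> n; exact: measurableI.
  + move=> n; apply: (hPn n).2; [exact: measurableI | exact: subIsetr|].
    exact: (null_sub (measurableI _ _ mC (mBn n)) mC (@subIsetl _ _ _) (hP C mC PC0 n)).
  + exact: mC.
  + by move=> x Cx; have [n _ Bnx] := CB x Cx; exists n.
have [Bs [mBs BsE [Ps FPs chPs]] maxB] := @exhaust _ _ _ mu E mE muE S
  (fun B SB => let: And3 a b _ := SB in conj a b) S0 SU.
exists Ps => // P FP A mA AE PsA0.
have muAB : mu (A `&` Bs) = 0%E.
  apply: chPs; [exact: measurableI | exact: subIsetr |].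
  exact: (null_sub (measurableI _ _ mA mBs) mA (@subIsetl _ _ _) PsA0).
pose A' := A `\` Bs.
have mA' : measurable A' by exact: measurableD.
pose SP := [set N | [/\ measurable N, N `<=` A' & P N = 0%E]].
have SP0 : SP set0.
  by split; [exact: measurable0 | exact: sub0set | exact: measure0].
have SPU : forall Bn : (set T)^nat, (forall n, SP (Bn n)) -> SP (\bigcup_n Bn n).
  move=> Bn hB; have mBn n : measurable (Bn n) by have [] := hB n.
  split; [exact: bigcup_measurable | by move=> x [n _ Bnx]; have [_ /(_ x Bnx)] := hB n|].
  apply: (null_bigcup Bn mBn) => //; first by move=> n; have [] := hB n.
  exact: bigcup_measurable.
have [N [mN NA' PN0] maxN] := @exhaust _ _ _ mu E mE muE SP
  (fun B SB => let: And3 a b _ := SB in conj a (fun x Bx => AE x (b x Bx).1)) SP0 SPU.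
have muNfin : mu N \is a fin_num.
  rewrite ge0_fin_numE // (le_lt_trans _ muE) //; apply: le_measure; rewrite ?inE //.
  by move=> x /NA' [/AE].
have [Q FQ hQ] := pair_F FP FPs.
have mAN : measurable (A' `\` N) by exact: measurableD.
pose B' := Bs `|` (A' `\` N).
have SB' : S B'.
  split; [exact: measurableU | by move=> x [/BsE|[[/AE]]] |].
  exists Q => // C mC CB' QC0.
  have [PC0 PsC0] := hQ C mC QC0.
  have h1 : mu (C `&` Bs) = 0%E.
    apply: chPs; [exact: measurableI | exact: subIsetr |].
    exact: (null_sub (measurableI _ _ mC mBs) mC (@subIsetl _ _ _) PsC0).
  pose D := C `&` (A' `\` N).
  have mD : measurable D by exact: measurableI.
  have h2 : mu D = 0%E.
    have SND : SP (N `|` D).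
      split; [exact: measurableU | by move=> x [/NA'|[_ []]] |].
      apply: null_U2 => //.
      exact: (null_sub mD mC (@subIsetl _ _ _) PC0).
    have := maxN _ SND.
    rewrite measureU //; last by apply/seteqP; split => x // [Nx [_ []]].
    by apply: fin_add_le0 => //.
  apply: (null_sub mC (measurableU _ _ (measurableI _ _ mC mBs) mD)) => //.
    by move=> x Cx; case: (CB' x Cx) => ?; [left|right]; split.
  exact: (null_U2 (measurableI _ _ mC mBs) mD h1 h2).
have := maxB _ SB'.
rewrite measureU //; last by apply/seteqP; split => x // [Bx [[_ []]]].
move=> /fin_add_le0 h.
have muAN : mu (A' `\` N) = 0%E.
  apply: h => //; rewrite ge0_fin_numE // (le_lt_trans _ muE) //.
  by apply: le_measure; rewrite ?inE.
have PAN : P (A' `\` N) = 0%E by exact: hdom.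
have PAB : P (A `&` Bs) = 0%E by apply: hdom => //; exact: measurableI.
apply: (null_sub mA (measurableU _ _ (measurableI _ _ mA mBs) (measurableU _ _ mAN mN))).
- move=> x Ax; have [Bx|nBx] := pselect (Bs x); first by left.
  have [Nx|nNx] := pselect (N x); first by right; right.
  by right; left.
- by apply: null_U2 => //; [exact: measurableI| exact: measurableU| exact: null_U2].
Qed.

Lemma halmos_savage (P00 : probability T R) : sigma_finite setT mu -> F P00 ->
  exists2 P0 : probability T R, F P0 & forall P, F P -> forall A, measurable A ->
    P0 A = 0%E -> P A = 0%E.
Proof.
move=> [En covE hEn] F00.
have /choice[PE hPE] : forall n, exists PE : probability T R, F PE /\
    forall P, F P -> forall A, measurable A -> A `<=` En n -> PE A = 0%E -> P A = 0%E.
  move=> n; have [mE muE] := hEn n.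
  by have [PE FPE h] := local_dom mE muE F00; exists PE.
have [P0 FP0 hP0] := @comb_F PE (fun n => (hPE n).1).
exists P0 => // P FP A mA h0.
have mEn n : measurable (En n) by have [] := hEn n.
apply: (@null_bigcup _ _ _ P (fun n => A `&` En n)) => //.
- by move=> n; exact: measurableI.
- move=> n; apply: (hPE n).2; [exact: FP | exact: measurableI | exact: subIsetr |].
  exact: (null_sub (measurableI _ _ mA (mEn n)) mA (@subIsetl _ _ _) (hP0 A mA h0 n)).
- move=> x Ax; have : setT x by [].
  by rewrite covE => -[n _ Ex]; exists n.
Qed.

End main.

Unset Implicit Arguments.

Theorem lemma3p2 (d : measure_display) (T : measurableType d) (R : realType)
  (F : set (probability T R)) :
  sigma_convex F ->
  ((exists mu : {measure set T -> \bar R},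
      sigma_finite setT mu /\ fam_dominated_by F mu)
   <->
   (exists Q : set (probability T R),
      [/\ countable Q,
          (forall P1 P2, Q P1 -> Q P2 ->
             (P1 : set T -> \bar R) <> P2 -> msingular P1 P2),
          lll Q F &
          lll F (sconv Q)])).
Proof.
move=> sF; split.
- move=> [mu [sfin hdom']].
  have hdom : forall P, F P -> forall A, measurable A -> mu A = 0%E -> P A = 0%E.
    by move=> P FP; apply/null_content_dominatesP; exact: hdom'.
  have [[P00 F00]|nF] := pselect (exists P, F P); last first.
    exists set0; split; first exact: countable0.
    + by [].
    + by [].
    + by move=> P FP; exfalso; apply: nF; exists P.
  have [P0 FP0 hP0] := halmos_savage sF hdom sfin F00.
  exists [set P0]; split.
  + exact: countable1.
  + by move=> P1 P2 -> -> [].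
  + by move=> P ->; exists P0 => // A.
  + move=> P FP; exists (comb (fun _ => P0)); first exact: comb_sconv.
    apply/null_content_dominatesP => A mA h.
    exact: (hP0 P FP A mA (comb0 mA h 0%N)).
- move=> [Q [cQ _ _ hFQ]].
  have /pcard_surjP [g hg] := cQ.
  exists (comb g); split.
  + apply: fin_num_fun_sigma_finite; first by rewrite measure0.
    by move=> U mU; exact: fin_num_measure.
  + move=> P FP; have [Q' [lam [Pk [_ _ hPk hQ'A]]] PQ'] := hFQ P FP.
    apply/null_content_dominatesP => A mA h0.
    have Q'0 : Q' A = 0%E.
      rewrite hQ'A //; apply: eseries0 => i _ _.
      have [j _ <-] := hg (Pk i) (hPk i).
      by rewrite (comb0 mA h0 j) mule0.
    by move/null_content_dominatesP : PQ'; apply.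
Qed.
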